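(* Let $\alpha,\beta,\lambda\in\mathbb{R}$ with $\beta\neq 0$, let $J_1^{**}=\mathrm{diag}(\alpha+\beta i,\ \alpha-\beta i,\ \lambda)$ and $h>0$. Define $$T_1=2\beta\big(e^{\alpha h}\cos(\beta h)-e^{\lambda h}\big)+2e^{\alpha h}(\lambda-\alpha)\sin(\beta h),$$ $$\begin{aligned}T_2={}&\alpha\big(1-e^{\alpha h}\cos(\beta h)\big)\big(-2e^{\alpha h}\sin(\beta h)\big)+\alpha e^{\alpha h}\sin(\beta h)\big(2e^{\lambda h}-2e^{\alpha h}\cos(\beta h)\big)\\&+\beta\big(1-e^{\alpha h}\cos(\beta h)\big)\big(2e^{\alpha h}\cos(\beta h)-2e^{\lambda h}\big)+\beta e^{\alpha h}\sin(\beta h)\big(-2e^{\alpha h}\sin(\beta h)\big)\\&+\lambda\big(1-e^{\lambda h}\big)\big(2e^{\alpha h}\sin(\beta h)\big),\end{aligned}$$ $$T_3=-2\beta+2\alpha e^{\alpha h}\sin(\beta h)+2\beta e^{\alpha h}\cos(\beta h),$$ and $$\theta=\frac{T_1}{T_2},\qquad \phi=\frac{2e^{\alpha h}\sin(\beta h)}{2\beta+T_3\theta},\qquad \psi=e^{\lambda h}-\phi\lambda\big(\theta e^{\lambda h}+1-\theta\big).$$ Then (whenever these expressions are defined and the scheme is uniquely solvable for $\mathbf{x}_{k+1}$) the difference scheme $$\frac{\mathbf{x}_{k+1}-\psi\mathbf{x}_k}{\phi}=J_1^{**}\big[\theta\mathbf{x}_{k+1}+(1-\theta)\mathbf{x}_k\big]$$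 is exact for the system $\mathbf{x}'=J_1^{**}\mathbf{x}$.
   Context: A one-step difference scheme with step size $h>0$ for $\mathbf{x}'=M\mathbf{x}$ is called exact if for every initial vector $\mathbf{x}_0$ the sequence $(\mathbf{x}_k)$ it generates satisfies $\mathbf{x}_k=\mathbf{x}(kh)$ for all $k\ge 0$, where $\mathbf{x}(t)$ solves $\mathbf{x}'=M\mathbf{x}$, $\mathbf{x}(0)=\mathbf{x}_0$. *)

(* Defs.v *)
From Stdlib Require Import Reals.
From Coquelicot Require Import Coquelicot.
Open Scope R_scope.

Inductive idx3 : Set := i1 | i2 | i3.

Definition vec3 := idx3 -> C.

Definition mat3 := idx3 -> idx3 -> C.

Definition mxv (M : mat3) (x : vec3) : vec3 :=
  fun i => Cplus (Cplus (Cmult (M i i1) (x i1)) (Cmult (M i i2) (x i2)))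
                 (Cmult (M i i3) (x i3)).

Definition diag3 (d1 d2 d3 : C) : mat3 :=
  fun i j => match i, j with
             | i1, i1 => d1 | i2, i2 => d2 | i3, i3 => d3 | _, _ => RtoC 0
             end.

(* x : R -> C^3 solves x' = M x (derivative w.r.t. the real variable t,
   componentwise in C viewed as a real normed space) with x(0) = x0. *)
Definition solves_ivp (M : mat3) (x0 : vec3) (x : R -> vec3) : Prop :=
  x 0 = x0 /\
  forall (t : R) (i : idx3),
    is_derive (K := R_AbsRing) (V := C_R_NormedModule)
      (fun s => x s i) t (mxv M (x t) i).

Definition uniquely_solvable (step : vec3 -> vec3 -> Prop) : Prop :=
  forall u : vec3, exists! v : vec3, step u v.

Definition exact_scheme (M : mat3) (h : R) (step : vec3 -> vec3 -> Prop) : Prop :=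
  forall (x0 : vec3) (xs : nat -> vec3),
    xs O = x0 -> (forall k, step (xs k) (xs (S k))) ->
    forall x : R -> vec3, solves_ivp M x0 x ->
    forall k : nat, xs k = x (INR k * h).

Definition nsfd_step (M : mat3) (psi phi theta : R) (u v : vec3) : Prop :=
  forall i : idx3,
    Cdiv (Cminus (v i) (Cmult (RtoC psi) (u i))) (RtoC phi)
    = mxv M (fun j => Cplus (Cmult (RtoC theta) (v j))
                            (Cmult (RtoC (1 - theta)) (u j))) i.

(* Main.v *)
Require Import Defs.
From Stdlib Require Import Reals.
From Coquelicot Require Import Coquelicot.
Open Scope R_scope.
From Stdlib Require Import Lra FunctionalExtensionality.

Lemma deriv_fst (f : R -> C) t l :
  is_derive (K := R_AbsRing) (V := C_R_NormedModule) f t l ->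
  is_derive (fun s => fst (f s)) t (fst l).
Proof.
  intros H. unfold is_derive in *.
  eapply filterdiff_ext_lin.
  eapply (filterdiff_comp f (fun p : C_R_NormedModule => fst p)). exact H.
  apply filterdiff_linear. apply (is_linear_fst (U:=R_NormedModule) (V:=R_NormedModule)).
  intros y. simpl. reflexivity.
Qed.

Lemma deriv_snd (f : R -> C) t l :
  is_derive (K := R_AbsRing) (V := C_R_NormedModule) f t l ->
  is_derive (fun s => snd (f s)) t (snd l).
Proof.
  intros H. unfold is_derive in *.
  eapply filterdiff_ext_lin.
  eapply (filterdiff_comp f (fun p : C_R_NormedModule => snd p)). exact H.
  apply filterdiff_linear. apply (is_linear_snd (U:=R_NormedModule) (V:=R_NormedModule)).
  intros y. simpl. reflexivity.
Qed.

Lemma const_of_deriv0 (g : R -> R) :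
  (forall t, is_derive g t 0) -> forall t, g t = g 0.
Proof.
  intros H t. destruct (Rtotal_order t 0) as [Hl|[He|Hg]].
  - apply (eq_is_derive (V:=R_NormedModule) g t 0); [intros; apply H | exact Hl].
  - subst; reflexivity.
  - symmetry. apply (eq_is_derive (V:=R_NormedModule) g 0 t); [intros; apply H | exact Hg].
Qed.

Lemma ode_scalar (a b : R) (u w : R -> R) :
  (forall t, is_derive u t (a * u t - b * w t)) ->
  (forall t, is_derive w t (a * w t + b * u t)) ->
  forall t, u t = exp (a*t) * (cos (b*t) * u 0 - sin (b*t) * w 0)
         /\ w t = exp (a*t) * (sin (b*t) * u 0 + cos (b*t) * w 0).
Proof.
  intros Hu Hw.
  set (p := fun t => exp (-a*t) * (cos (b*t) * u t + sin (b*t) * w t)).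
  set (q := fun t => exp (-a*t) * (cos (b*t) * w t - sin (b*t) * u t)).
  assert (Dp : forall t, is_derive p t 0).
  { intros t. unfold p.
    evar (e : R). replace 0 with e. 
    apply (Derive.is_derive_mult (fun t => exp (-a*t))).
    auto_derive; auto.
    apply (is_derive_plus (fun t => cos (b*t) * u t)).
    apply (Derive.is_derive_mult (fun t => cos (b*t))). auto_derive; auto. apply Hu.
    apply (Derive.is_derive_mult (fun t => sin (b*t))). auto_derive; auto. apply Hw.
    unfold e; simpl. unfold plus, mult; simpl. unfold plus, mult; simpl. ring. }
  assert (Dq : forall t, is_derive q t 0).
  { intros t. unfold q.
    evar (e : R). replace 0 with e. 
    apply (Derive.is_derive_mult (fun t => exp (-a*t))).
    auto_derive; auto.
    apply (is_derive_minus (fun t => cos (b*t) * w t)).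
    apply (Derive.is_derive_mult (fun t => cos (b*t))). auto_derive; auto. apply Hw.
    apply (Derive.is_derive_mult (fun t => sin (b*t))). auto_derive; auto. apply Hu.
    unfold e; simpl. unfold plus, mult, minus, opp; simpl. unfold plus, mult, opp; simpl. ring. }
  intros t.
  pose proof (const_of_deriv0 p Dp t) as Ep.
  pose proof (const_of_deriv0 q Dq t) as Eq.
  unfold p, q in Ep, Eq.
  rewrite !Rmult_0_r, exp_0, cos_0, sin_0 in Ep, Eq.
  assert (Ep' : exp (- a * t) * (cos (b * t) * u t + sin (b * t) * w t) = u 0) by (rewrite Ep; ring).
  assert (Eq' : exp (- a * t) * (cos (b * t) * w t - sin (b * t) * u t) = w 0) by (rewrite Eq; ring).
  rewrite <- Ep', <- Eq'.
  assert (E1 : exp (a*t) * exp (-a*t) = 1).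
  { rewrite <- exp_plus. replace (a*t + -a*t) with 0 by ring. apply exp_0. }
  pose proof (sin2_cos2 (b*t)) as E2. unfold Rsqr in E2.
  split.
  - transitivity (exp (a*t) * exp (-a*t) * u t * (sin (b*t) * sin (b*t) + cos (b*t) * cos (b*t))).
    rewrite E1, E2; ring. ring.
  - transitivity (exp (a*t) * exp (-a*t) * w t * (sin (b*t) * sin (b*t) + cos (b*t) * cos (b*t))).
    rewrite E1, E2; ring. ring.
Qed.

Lemma ids : forall (a b l ea el c s: R),
  let T1 := 2 * b * (ea * c - el) + 2 * ea * (l - a) * s in
  let T2 := a * (1 - ea * c) * (- 2 * ea * s)
            + a * ea * s * (2 * el - 2 * ea * c)
            + b * (1 - ea * c) * (2 * ea * c - 2 * el)
            + b * ea * s * (- 2 * ea * s)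
            + l * (1 - el) * (2 * ea * s) in
  let T3 := - 2 * b + 2 * a * ea * s + 2 * b * ea * c in
  let theta := T1 / T2 in
  let phi := 2 * ea * s / (2 * b + T3 * theta) in
  let psi := el - phi * l * (theta * el + 1 - theta) in
  T2 <> 0 -> 2 * b + T3 * theta <> 0 ->
  ea * s = phi * (b * (theta * (ea * c) + (1 - theta)) + a * (theta * (ea * s)))
  /\ ea * c - psi = phi * (a * (theta * (ea * c) + (1 - theta)) - b * (theta * (ea * s))).
Proof.
  intros a b l ea el c s. cbv zeta. intros HT2 HD.
  set (T1 := 2 * b * (ea * c - el) + 2 * ea * (l - a) * s) in *.
  set (T2 := a * (1 - ea * c) * (- 2 * ea * s)
            + a * ea * s * (2 * el - 2 * ea * c)
            + b * (1 - ea * c) * (2 * ea * c - 2 * el)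
            + b * ea * s * (- 2 * ea * s)
            + l * (1 - el) * (2 * ea * s)) in *.
  set (T3 := - 2 * b + 2 * a * ea * s + 2 * b * ea * c) in *.
  set (th := T1 / T2) in *.
  assert (Hth : th * T2 = T1) by (unfold th; field; exact HT2).
  set (D := 2 * b + T3 * th) in *.
  split.
  - unfold D, T3 in *. field. assumption.
  - assert (key : (ea * c - el) * D + 2 * ea * s * l * (th * el + 1 - th)
                  = 2 * ea * s * (a * (th * (ea * c) + (1 - th)) - b * (th * (ea * s)))).
    { unfold D, T3. unfold T1, T2 in Hth. clearbody th. lra. }
    transitivity (((ea * c - el) * D + 2 * ea * s * l * (th * el + 1 - th)) / D).
    + field. exact HD.
    + rewrite key. field. exact HD.
Qed.

Definition Eexp (d : C) (t : R) : C :=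
  (exp (fst d * t) * cos (snd d * t), exp (fst d * t) * sin (snd d * t)).

Lemma ode_C (d : C) (f : R -> C) :
  (forall t, is_derive (K := R_AbsRing) (V := C_R_NormedModule) f t (Cmult d (f t))) ->
  forall t, f t = Cmult (Eexp d t) (f 0).
Proof.
  intros Hf t.
  assert (Hu : forall t, is_derive (fun s => fst (f s)) t
                 (fst d * fst (f t) - snd d * snd (f t))).
  { intros t0. exact (deriv_fst f t0 _ (Hf t0)). }
  assert (Hw : forall t, is_derive (fun s => snd (f s)) t
                 (fst d * snd (f t) + snd d * fst (f t))).
  { intros t0. exact (deriv_snd f t0 _ (Hf t0)). }
  destruct (ode_scalar (fst d) (snd d) _ _ Hu Hw t) as [E1 E2].
  apply injective_projections; simpl; rewrite ?E1, ?E2; ring.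
Qed.

Lemma Eexp_add (d : C) t h : Eexp d (t + h) = Cmult (Eexp d h) (Eexp d t).
Proof.
  unfold Eexp, Cmult; simpl.
  rewrite !Rmult_plus_distr_l, exp_plus, cos_plus, sin_plus.
  apply injective_projections; simpl; ring.
Qed.

Lemma Cdiv_eq (X Y : C) (p : R) : p <> 0 -> X = Cmult (RtoC p) Y -> Cdiv X (RtoC p) = Y.
Proof.
  intros Hp ->. destruct Y as [y1 y2].
  unfold Cdiv, Cinv, Cmult, RtoC; simpl.
  apply injective_projections; simpl; field; lra.
Qed.

Lemma step_alg (e1 e2 d1 d2 u1 u2 ps ph th : R) :
  Cminus (e1,e2) (RtoC ps) = Cmult (RtoC ph) (Cmult (d1,d2) (Cplus (Cmult (RtoC th) (e1,e2)) (RtoC (1-th)))) ->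
  Cminus (Cmult (e1,e2) (u1,u2)) (Cmult (RtoC ps) (u1,u2))
  = Cmult (RtoC ph) (Cmult (d1,d2) (Cplus (Cmult (RtoC th) (Cmult (e1,e2) (u1,u2))) (Cmult (RtoC (1-th)) (u1,u2)))).
Proof.
  intros H.
  pose proof (f_equal fst H) as H1. pose proof (f_equal snd H) as H2.
  unfold Cminus, Cplus, Copp, Cmult, RtoC in H1, H2 |- *; simpl in H1, H2 |- *.
  assert (A1 := f_equal (fun z => z * u1) H1).
  assert (A2 := f_equal (fun z => z * u2) H1).
  assert (A3 := f_equal (fun z => z * u1) H2).
  assert (A4 := f_equal (fun z => z * u2) H2).
  simpl in A1, A2, A3, A4.
  apply injective_projections; simpl; lra.
Qed.

Theorem corollary1 (alpha beta lambda h : R) :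
  beta <> 0 -> h > 0 ->
  let J := diag3 (alpha, beta) (alpha, - beta) (RtoC lambda) in
  let ea := exp (alpha * h) in
  let el := exp (lambda * h) in
  let c := cos (beta * h) in
  let s := sin (beta * h) in
  let T1 := 2 * beta * (ea * c - el) + 2 * ea * (lambda - alpha) * s in
  let T2 := alpha * (1 - ea * c) * (- 2 * ea * s)
            + alpha * ea * s * (2 * el - 2 * ea * c)
            + beta * (1 - ea * c) * (2 * ea * c - 2 * el)
            + beta * ea * s * (- 2 * ea * s)
            + lambda * (1 - el) * (2 * ea * s) in
  let T3 := - 2 * beta + 2 * alpha * ea * s + 2 * beta * ea * c in
  let theta := T1 / T2 in
  let phi := 2 * ea * s / (2 * beta + T3 * theta) in
  let psi := el - phi * lambda * (theta * el + 1 - theta) in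
  T2 <> 0 -> 2 * beta + T3 * theta <> 0 -> phi <> 0 ->
  uniquely_solvable (nsfd_step J psi phi theta) ->
  exact_scheme J h (nsfd_step J psi phi theta).
Proof.
  intros Hb Hh J ea el c s T1 T2 T3 theta phi psi HT2 HD Hphi Hus.
  assert (HI : ea * s = phi * (beta * (theta * (ea * c) + (1 - theta)) + alpha * (theta * (ea * s)))
    /\ ea * c - psi = phi * (alpha * (theta * (ea * c) + (1 - theta)) - beta * (theta * (ea * s))))
    by exact (ids alpha beta lambda ea el c s HT2 HD).
  destruct HI as [I1 I2].
  set (dsel := fun i => match i with i1 => (alpha, beta) | i2 => (alpha, - beta)
                                   | i3 => RtoC lambda end : C).
  assert (HJ : forall v i, mxv J v i = Cmult (dsel i) (v i)).
  { intros v i. unfold J, mxv, diag3, dsel.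
    destruct i; unfold Cplus, Cmult, RtoC; simpl;
    apply injective_projections; simpl; ring. }
  set (E := fun i => Eexp (dsel i) h).
  assert (HC : forall i, Cminus (E i) (RtoC psi)
     = Cmult (RtoC phi) (Cmult (dsel i) (Cplus (Cmult (RtoC theta) (E i)) (RtoC (1-theta))))).
  { intros i. unfold E, Eexp, dsel. destruct i; simpl.
    - change (exp (alpha * h)) with ea. change (cos (beta * h)) with c.
      change (sin (beta * h)) with s.
      unfold Cminus, Cplus, Copp, Cmult, RtoC; apply injective_projections; simpl; nra.
    - replace (- beta * h) with (- (beta * h)) by ring.
      rewrite cos_neg, sin_neg.
      change (exp (alpha * h)) with ea. change (cos (beta * h)) with c.
      change (sin (beta * h)) with s.
      unfold Cminus, Cplus, Copp, Cmult, RtoC; apply injective_projections; simpl; lra.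
    - rewrite Rmult_0_l, cos_0, sin_0.
      change (exp (lambda * h)) with el.
      unfold Cminus, Cplus, Copp, Cmult, RtoC; apply injective_projections; simpl;
      unfold psi; ring. }
  assert (Hstepw : forall u, nsfd_step J psi phi theta u (fun i => Cmult (E i) (u i))).
  { intros u i. rewrite HJ. apply Cdiv_eq; [exact Hphi|].
    specialize (HC i). destruct (E i) as [e1 e2]. destruct (dsel i) as [d1 d2].
    destruct (u i) as [u1 u2]. apply step_alg. exact HC. }
  intros x0 xs H0 Hstep x [Hx0 Hder].
  assert (Hx : forall t, x (t + h) = fun i => Cmult (E i) (x t i)).
  { intros t. apply functional_extensionality. intros i.
    assert (Hd : forall t, is_derive (K := R_AbsRing) (V := C_R_NormedModule)
                  (fun s => x s i) t (Cmult (dsel i) (x t i))).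
    { intros t0. rewrite <- HJ. apply Hder. }
    rewrite (ode_C _ _ Hd (t + h)), (ode_C _ _ Hd t), Eexp_add.
    unfold E. symmetry. apply Cmult_assoc. }
  induction k as [|k IH].
  - simpl. rewrite Rmult_0_l, H0, Hx0. reflexivity.
  - destruct (Hus (xs k)) as [v [Hv Huniq]].
    rewrite <- (Huniq _ (Hstep k)), (Huniq _ (Hstepw (xs k))).
    rewrite S_INR, Rmult_plus_distr_r, Rmult_1_l, Hx, IH. reflexivity.
Qed.
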